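(* Let $p$ be an odd prime and $M$ the sub-add move matrix, with $t$, $k$, $i$ as in the context. (a) If $t$ is even, then $\Gamma_{M,\,p}$ has no secondary cycles. (b) If $t\equiv1\pmod 4$ and $(1+i)^t=i$, then all secondary cycles have length $t$. (c) If $t\equiv3\pmod4$ and $(1+i)^t=i$, then all secondary cycles have length $2t$. (d) If $t\equiv1\pmod4$ and $(1+i)^t=-i$, then all secondary cycles have length $2t$. (e) If $t\equiv3\pmod4$ and $(1+i)^t=-i$, then all secondary cycles have length $t$.
   Context: The sub-add move matrix is $M=\begin{pmatrix}1&-1\\1&1\end{pmatrix}$. $\Gamma_{M,\,p}$ is the directed graph with vertex set $\mathbb Z_p^2$ and arcs $((a,b),(a-b,a+b))$ (mod $p$; loops allowed). A directed cycle is a cycle in the underlying undirected graph such that in the induced directed subgraph every vertex has in- and out-degree $1$; a loop is a directed $1$-cycle. Let $t$ be the multiplicative order of $-4$ in $GF(p)$ and $k=4t$ (the $\mathbb Z_p$-order of $M$). Let $i\in GF(p^2)$ with $i^2=-1$, chosen so that ${\rm ord}(1-i)\le{\rm ord}(1+i)$ (multiplicative orders). A primary cycle is a directed cycle of length $k$; a secondary cycle is a directed cycle that is neither primary nor a $1$-cycle. *)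

(* Defs.v *)
From HB Require Import structures.
From mathcomp Require Import all_boot all_order all_algebra all_fingroup all_field.
Set Implicit Arguments. Unset Strict Implicit. Unset Printing Implicit Defensive.
Import GRing.Theory.
Local Open Scope ring_scope.

(* Multiplicative order of an element of a finite field (the group order of
   x in the unit group {unit F}; meaningful for x <> 0). *)
Definition mulord (F : finFieldType) (x : F) : nat :=
  #[insubd (1 : {unit F}) x]%g.

Definition subadd (p : nat) (v : 'F_p * 'F_p) : 'F_p * 'F_p :=
  (v.1 - v.2, v.1 + v.2).

(* A directed cycle of Gamma_{M,p}: a nonempty duplicate-free list
   [x_0; ...; x_{n-1}] with arcs x_j -> x_{j+1} and x_{n-1} -> x_0.
   Its length is the size of the list (a loop has length 1). *)
Definition dcycle (p : nat) (c : seq ('F_p * 'F_p)) : bool :=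
  [&& c != [::], uniq c & fcycle (@subadd p) c].

Definition tord (p : nat) : nat := mulord (-4 : 'F_p).

(* secondary cycle: neither primary (length k = 4t) nor a 1-cycle *)
Arguments dcycle : clear implicits.
Definition secondary (p : nat) (c : seq ('F_p * 'F_p)) : bool :=
  [&& dcycle p c, size c != 1%N & size c != (4 * tord p)%N].

Arguments secondary : clear implicits.

(* Main.v *)
Require Import Defs.
From HB Require Import structures.
From mathcomp Require Import all_boot all_order all_algebra all_fingroup all_field.
From mathcomp Require Import ring.
Set Implicit Arguments. Unset Strict Implicit. Unset Printing Implicit Defensive.
Import GRing.Theory.
Local Open Scope ring_scope.

Lemma iter_order_dvd (T : finType) (f : T -> T) (finj : injective f) (x : T) k :
  (iter k f x == x) = (fingraph.order f x %| k)%N.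
Proof.
have Hn := fingraph.order_gt0 f x.
have iterqn : forall q, iter (q * fingraph.order f x) f x = x.
  by elim=> [|q IH] //; rewrite mulSn iterD IH iter_order.
rewrite {1}(divn_eq k (fingraph.order f x)) addnC iterD iterqn.
apply/eqP/idP => [H|].
  have := findex_iter (ltn_pmod k Hn); rewrite H findex0 => H0.
  by apply/eqP; rewrite -H0.
by move/eqP => ->.
Qed.

Lemma mulord_dvd (F : finFieldType) (x : F) n : x != 0 ->
  (mulord x %| n)%N = (x ^+ n == 1).
Proof.
move=> x0; rewrite /mulord cyclic.order_dvdn.
have ux : val (insubd (1%g : {unit F}) x) = x by rewrite insubdK // unitfE.
apply/eqP/eqP => [H|H].
  by rewrite -ux -FinRing.val_unitX H.
by apply: val_inj; rewrite FinRing.val_unitX ux H.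
Qed.

Section Fp.
Variables (p : nat) (pr_p : prime p) (odd_p : odd p).
Local Notation K := 'F_p.
Local Notation f := (@subadd p).

Definition sc (s : K) (v : K * K) : K * K := (s * v.1, s * v.2).

Lemma p_gt2 : (2 < p)%N.
Proof.
have := prime_gt1 pr_p; rewrite leq_eqVlt => /orP[/eqP E|//].
by move: odd_p; rewrite -E.
Qed.

Lemma natK_eq0 n : ((n%:R : K) == 0) = (p %| n)%N.
Proof. by rewrite (dvdn_pcharf (pchar_Fp pr_p)). Qed.

Lemma two_neq0 : (2 : K) != 0.
Proof.
rewrite natK_eq0; apply/negP => /dvdn_leq H; have := p_gt2.
by rewrite ltnNge H.
Qed.

Lemma four_neq0 : (4 : K) != 0.
Proof.
have -> : (4 : K) = 2 * 2 by rewrite -natrM.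
by rewrite mulf_neq0 // two_neq0.
Qed.

Lemma m4_neq0 : (-4 : K) != 0.
Proof. by rewrite oppr_eq0 four_neq0. Qed.

Lemma f_sc s v : f (sc s v) = sc s (f v).
Proof. by rewrite /subadd /sc /=; congr pair; ring. Qed.

Lemma iter_sc s v k : iter k f (sc s v) = sc s (iter k f v).
Proof. by elim: k => //= k ->; rewrite f_sc. Qed.

Lemma iter4 v : iter 4 f v = sc (-4) v.
Proof. by rewrite /= /subadd /sc /=; congr pair; ring. Qed.

Lemma iter4m m r v : iter (4 * m + r) f v = sc ((-4) ^+ m) (iter r f v).
Proof.
elim: m => [|m IH]; first by rewrite muln0 add0n /sc expr0 !mul1r; case: (iter r f v).
rewrite mulnS -addnA iterD iter4 IH /sc /= exprS; congr pair; ring.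
Qed.

Lemma f_inj : injective f.
Proof.
move=> [a b] [c d] H.
have E1 : a - b = c - d := congr1 fst H.
have E2 : a + b = c + d := congr1 snd H.
have Ha : 2 * a = 2 * c.
  have -> : 2 * a = (a - b) + (a + b) by ring.
  by rewrite E1 E2; ring.
have Hb : 2 * b = 2 * d.
  have -> : 2 * b = (a + b) - (a - b) by ring.
  by rewrite E1 E2; ring.
by rewrite (mulfI two_neq0 Ha) (mulfI two_neq0 Hb).
Qed.

Lemma tord_dvd m : (tord p %| m)%N = ((-4 : K) ^+ m == 1).
Proof. exact: mulord_dvd m4_neq0. Qed.


Lemma sc_fix_eq1 s x y : (x, y) != (0, 0) -> (sc s (x, y) == (x, y)) = (s == 1).
Proof.
move=> nz; rewrite /sc /= xpair_eqE.
apply/andP/eqP => [[/eqP E1 /eqP E2]|->]; last by rewrite !mul1r.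
have [x0|x0] := eqVneq x 0.
  have [y0|y0] := eqVneq y 0; first by move: nz; rewrite x0 y0 eqxx.
  by apply: (mulIf y0); rewrite mul1r.
by apply: (mulIf x0); rewrite mul1r.
Qed.

Lemma dvd4 t q r : (r < 4)%N -> (0 < t)%N ->
  (4 * t %| 4 * q + r)%N = (r == 0%N) && (t %| q)%N.
Proof.
move=> r4 t0; have [->|r0] := eqVneq r 0%N; first by rewrite addn0 dvdn_pmul2l.
apply/negbTE/negP => H.
have : (4 %| 4 * q + r)%N by apply: dvdn_trans H; apply: dvdn_mulr.
rewrite dvdn_addr ?dvdn_mulr // => /dvdn_leq.
by rewrite lt0n r0 leqNgt r4 => /(_ isT).
Qed.

Lemma tord_gt0 : (0 < tord p)%N.
Proof. exact: fingroup.order_gt0. Qed.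

Lemma orbit_cases v : let n := fingraph.order f v in
  n = 1%N \/ n = (4 * tord p)%N \/
  exists mu : K, mu ^+ 2 = -1 /\ forall k, (n %| k)%N = ((1 - mu) ^+ k == 1).
Proof.
rewrite /=; case: v => x y.
have Hd k : (fingraph.order f (x, y) %| k)%N = (iter k f (x, y) == (x, y)).
  by rewrite iter_order_dvd //; exact: f_inj.
have [z|nz] := eqVneq (x, y) (0, 0).
  left; move/eqP: z; rewrite xpair_eqE => /andP[/eqP x0 /eqP y0]; apply/eqP; rewrite -dvdn1 Hd /= /subadd /= x0 y0.
  by rewrite subr0 addr0.
have [d0|d0] := eqVneq (x ^+ 2 + y ^+ 2) 0; last first.
  right; left.
  have key k : (iter k f (x, y) == (x, y)) = (4 * tord p %| k)%N.
    move: (k %/ 4)%N (k %% 4)%N (@ltn_pmod k 4 isT) (divn_eq k 4) => q r r4 ->.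
    rewrite mulnC iter4m dvd4 ?tord_gt0 // tord_dvd.
    set s := (-4 : K) ^+ q.
    case: r r4 => [|[|[|[|r]]]] // _.
    - by rewrite /= sc_fix_eq1.
    - have -> : iter 1 f (x, y) = (x - y, x + y) by [].
      rewrite andFb /sc /= xpair_eqE; apply/negbTE/negP => /andP[/eqP E1 /eqP E2].
      have H : (s - 1) * (x ^+ 2 + y ^+ 2) = x * (s * (x - y) - x) + y * (s * (x + y) - y) by ring.
      rewrite E1 E2 !subrr !mulr0 addr0 in H.
      move/eqP: H; rewrite mulf_eq0 (negbTE d0) orbF subr_eq0 => /eqP s1.
      rewrite s1 !mul1r in E1 E2.
      have y0 : y = 0 by rewrite (_ : y = x - (x - y)); [rewrite E1 subrr | ring].
      have x0 : x = 0 by rewrite (_ : x = (x + y) - y); [rewrite E2 subrr | ring].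
      by move: nz; rewrite x0 y0 eqxx.
    - have -> : iter 2 f (x, y) = (-2 * y, 2 * x) by rewrite /= /subadd /=; congr pair; ring.
      rewrite andFb /sc /= xpair_eqE; apply/negbTE/negP => /andP[/eqP E1 /eqP E2].
      have H : x ^+ 2 + y ^+ 2 = - (x * (s * (-2 * y) - x) + y * (s * (2 * x) - y)) by ring.
      by move: d0; rewrite H E1 E2 !subrr !mulr0 addr0 oppr0 eqxx.
    - have -> : iter 3 f (x, y) = (-2 * y - 2 * x, -2 * y + 2 * x).
        by rewrite /= /subadd /=; congr pair; ring.
      rewrite andFb /sc /= xpair_eqE; apply/negbTE/negP => /andP[/eqP E1 /eqP E2].
      have H : (1 + 2 * s) * (x ^+ 2 + y ^+ 2) = - (x * (s * (-2 * y - 2 * x) - x) + y * (s * (-2 * y + 2 * x) - y)) by ring.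
      rewrite E1 E2 !subrr !mulr0 addr0 oppr0 in H.
      move/eqP: H; rewrite mulf_eq0 (negbTE d0) orbF => /eqP s1.
      have y0 : y = 0.
        rewrite (_ : y = (s * (-2 * y - 2 * x) - x) + (1 + 2 * s) * (x + y)); last by ring.
        by rewrite E1 s1 subrr mul0r addr0.
      have x0 : x = 0.
        rewrite (_ : x = (1 + 2 * s) * (x - y) - (s * (-2 * y + 2 * x) - y)); last by ring.
        by rewrite E2 s1 subrr mul0r subr0.
      by move: nz; rewrite x0 y0 eqxx.
  apply/eqP; rewrite eqn_dvd Hd key dvdnn /= -key -Hd dvdnn //.
right; right.
have x0 : x != 0.
  apply: contraNneq nz => x0; move: d0; rewrite x0 expr0n /= add0r => /eqP.
  by rewrite expf_eq0 /= => /eqP ->.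
pose mu := y / x.
have ey : y = mu * x by rewrite /mu divfK.
have mu2 : mu ^+ 2 = -1.
  apply: (mulIf (expf_neq0 2 x0)); rewrite -exprMn -ey mulN1r.
  by apply/eqP; rewrite -addr_eq0 addrC d0.
exists mu; split => // k.
have fv : f (x, y) = sc (1 - mu) (x, y).
  rewrite /subadd /sc /= ey; congr pair; first by ring.
  by rewrite (_ : (1 - mu) * (mu * x) = mu * x - mu ^+ 2 * x); [rewrite mu2; ring | ring].
have itk : iter k f (x, y) = sc ((1 - mu) ^+ k) (x, y).
  elim: k => [|k IH]; first by rewrite /sc /= !mul1r.
  by rewrite iterS IH f_sc fv /sc /= exprS; congr pair; ring.
by rewrite Hd itk sc_fix_eq1.
Qed.
End Fp.

Lemma nat_cases t n : (0 < t)%N -> (0 < n)%N -> (forall m, (t %| m) = (n %| 4 * m))%N ->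
  [/\ (t %| n)%N, (n %| 4 * t)%N, (n = t \/ n = 2 * t \/ n = 4 * t)%N
    & (~~ odd t -> n = 4 * t)%N].
Proof.
move=> t0 n0 H.
have tn : (t %| n)%N by rewrite H dvdn_mull.
have n4t : (n %| 4 * t)%N by rewrite -H.
have cases : (n = t \/ n = 2 * t \/ n = 4 * t)%N.
  case/dvdnP: tn n0 n4t => q -> n0.
  move=> q4; move: q4; rewrite (dvdn_pmul2r t0) => q4.
  have := dvdn_leq (isT : (0 < 4)%N) q4; have q0 : (0 < q)%N by case: q n0 q4.
  clear n0; case: q q0 q4 => [|[|[|[|[|q]]]]] //= _ _ _; rewrite ?mul1n; auto.
split=> // et.
have [h ht] : exists h, t = (2 * h)%N.
  by exists t./2; rewrite -{1}(odd_double_half t) (negbTE et) add0n -mul2n.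
have h0 : (0 < h)%N by move: t0; rewrite ht muln_gt0.
have th : ~~ (t %| h)%N by rewrite ht gtnNdvd // -{1}(mul1n h) ltn_pmul2r.
have d1 : (t %| 4 * h)%N by rewrite ht -[(4 * h)%N]/(2 * 2 * h)%N -mulnA dvdn_mull.
case: cases => [nt|[n2t|//]].
  by move: th; rewrite H nt d1.
have : (n %| 4 * h)%N by rewrite n2t ht mulnA.
by rewrite -H (negbTE th).
Qed.

Lemma eig_nat p (pr_p : prime p) (odd_p : odd p) (mu : 'F_p) n :
  mu ^+ 2 = -1 -> (forall k, (n %| k)%N = ((1 - mu) ^+ k == 1)) ->
  forall m, (tord p %| m)%N = (n %| 4 * m)%N.
Proof.
move=> mu2 Hk m; rewrite Hk exprM (tord_dvd pr_p odd_p).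
have -> : (1 - mu) ^+ 4 = -4 + (mu ^+ 2 + 1) * (mu ^+ 2 - 4 * mu + 5) by ring.
by rewrite mu2 addNr mul0r addr0.
Qed.

Section Phi.
Variables (p : nat) (pr_p : prime p) (F : finFieldType) (chF : p \in [pchar F]).

Definition phi (z : 'F_p) : F := (z : nat)%:R.

Lemma phi_nat m : phi (m%:R) = m%:R.
Proof.
rewrite /phi val_Fp_nat //.
by rewrite [in RHS](divn_eq m p) natrD natrM (pcharf0 chF) mulr0 add0r.
Qed.

Lemma Fp_natE (z : 'F_p) : z = (z : nat)%:R.
Proof. by apply: ord_inj; rewrite val_Fp_nat // modn_small // -{2}(Fp_cast pr_p) ltn_ord. Qed.

Lemma phiD x y : phi (x + y) = phi x + phi y.
Proof. by rewrite [x]Fp_natE [y]Fp_natE -natrD !phi_nat natrD. Qed.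

Lemma phiM x y : phi (x * y) = phi x * phi y.
Proof. by rewrite [x]Fp_natE [y]Fp_natE -natrM !phi_nat natrM. Qed.

Lemma phi1 : phi 1 = 1.
Proof. by rewrite -[1 : 'F_p]mulr1n phi_nat mulr1n. Qed.

Lemma phi0 : phi 0 = 0.
Proof. by rewrite -[0 : 'F_p]/(0%:R) phi_nat. Qed.

Lemma phiN x : phi (- x) = - phi x.
Proof. by apply/eqP; rewrite -subr_eq0 opprK -phiD addNr phi0. Qed.

Lemma phiX x k : phi (x ^+ k) = phi x ^+ k.
Proof. by elim: k => [|k IH]; rewrite ?expr0 ?phi1 // !exprS phiM IH. Qed.

Lemma phi_inj : injective phi.
Proof.
move=> x y E; apply/eqP; rewrite -subr_eq0; apply/negPn/negP => nz.
have : phi ((x - y)^-1 * (x - y)) = 1 by rewrite mulVf // phi1.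
by rewrite phiM phiD phiN E addrN mulr0 => /eqP; rewrite eq_sym oner_eq0.
Qed.

End Phi.

Lemma key p (pr_p : prime p) (odd_p : odd p) c : secondary p c ->
  exists mu : 'F_p, [/\ mu ^+ 2 = -1, (forall k, (size c %| k)%N = ((1 - mu) ^+ k == 1)),
    size c <> (4 * tord p)%N & (0 < size c)%N].
Proof.
case/and3P => /and3P[cn uc fc] /eqP s1 /eqP s4.
case: c cn uc fc s1 s4 => [//|v c'] _ uc fc s1 s4.
have ord : fingraph.order (@subadd p) v = size (v :: c') := order_cycle fc uc (mem_head v c').
have := orbit_cases pr_p odd_p v; rewrite /= ord => -[|[|[mu [mu2 Hk]]]] //.
by exists mu; split.
Qed.

Theorem theorem7p2 (p : nat) (pr_p : prime p) (odd_p : odd p)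
  (F : finFieldType) (cardF : #|F| = (p ^ 2)%N) (i : F)
  (i2 : i ^+ 2 = -1) (iord : (mulord (1 - i)%R <= mulord (1 + i)%R)%N) :
  let t := tord p in
  [/\ (~~ odd t -> forall c, ~~ secondary p c),
      (t %% 4 = 1)%N -> (1 + i) ^+ t = i ->
        forall c, secondary p c -> size c = t,
      (t %% 4 = 3)%N -> (1 + i) ^+ t = i ->
        forall c, secondary p c -> size c = (2 * t)%N,
      (t %% 4 = 1)%N -> (1 + i) ^+ t = - i ->
        forall c, secondary p c -> size c = (2 * t)%N
    & (t %% 4 = 3)%N -> (1 + i) ^+ t = - i ->
        forall c, secondary p c -> size c = t].
Proof.
move=> t.
have chF : p \in [pchar F] by apply: card_finPcharP cardF pr_p.
have t0 : (0 < t)%N := tord_gt0 p.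
have m1n1 : (-1 : F) != 1.
  apply/eqP => h; have : (p %| 2)%N by rewrite (dvdn_pcharf chF) -[2%:R]/(1 + 1 : F) -{1}h addNr.
  by move/dvdn_leq => /(_ isT); rewrite leqNgt (p_gt2 pr_p odd_p).
have gen : forall c, secondary p c -> ((1 + i) ^+ t = i \/ (1 + i) ^+ t = - i) ->
   ((-i) ^+ t * (1 + i) ^+ t = 1 -> size c = t) /\
   ((-i) ^+ t * (1 + i) ^+ t = -1 -> size c = (2 * t)%N).
  move=> c sc hu; have [mu [mu2 Hk s4 n0]] := key pr_p odd_p sc.
  have [tn n4t cases _] := nat_cases t0 n0 (eig_nat pr_p odd_p mu2 Hk).
  pose m := @phi p F mu.
  have m2 : m ^+ 2 = -1 by rewrite /m -phiX // mu2 phiN // phi1.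
  have natK1 k : (size c %| k)%N = (@phi p F ((1 - mu) ^+ k) == 1 :> F).
    by rewrite Hk -(inj_eq (phi_inj pr_p chF)) phi1.
  have pat k : @phi p F ((1 - mu) ^+ k) = (1 - m) ^+ k.
    by rewrite phiX // phiD // phiN // phi1.
  have [mi|mi] : m = i \/ m = - i.
    have : (m - i) * (m + i) = 0.
      by rewrite (_ : (m - i) * (m + i) = m ^+ 2 - i ^+ 2); [rewrite m2 i2 subrr | ring].
    by move/eqP; rewrite mulf_eq0 subr_eq0 addr_eq0 => /orP[/eqP|/eqP]; auto.
  - have e : (1 - i) = (-i) * (1 + i) by rewrite (_ : 1 - i = -i * (1 + i) + (i ^+ 2 + 1)); [rewrite i2 addNr addr0 | ring].
    have pt : @phi p F ((1 - mu) ^+ t) = (-i) ^+ t * (1 + i) ^+ t by rewrite pat mi e exprMn.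
    split=> E.
      by apply/eqP; rewrite eqn_dvd tn andbT natK1 pt E.
    have n2 : (size c %| 2 * t)%N by rewrite natK1 mulnC exprM phiX // pt E sqrrN expr1n.
    have nt : ~~ (size c %| t)%N by rewrite natK1 pt E.
    case: cases => [ct|[//|//]]; by move: nt; rewrite ct dvdnn.
  - have pt : @phi p F ((1 - mu) ^+ t) = (1 + i) ^+ t by rewrite pat mi opprK.
    have nt : ~~ (size c %| t)%N.
      rewrite natK1 pt; apply/negP => /eqP h; apply: (negP m1n1); rewrite -i2.
      by case: hu h => -> h; [rewrite h expr1n | rewrite -sqrrN h expr1n].
    have n2 : ~~ (size c %| 2 * t)%N.
      rewrite natK1 mulnC exprM phiX // pt; case: hu => ->; rewrite ?sqrrN i2 //.
    by case: cases => [ct|[ct|//]]; [move: nt | move: n2]; rewrite ct ?dvdnn.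
have negi_t : (-i) ^+ t = (-i) ^+ (t %% 4).
  rewrite {1}(divn_eq t 4) exprD mulnC exprM.
  by rewrite (_ : (-i) ^+ 4 = (i ^+ 2) ^+ 2); [rewrite i2 sqrrN expr1n expr1n mul1r | ring].
split.
- move=> et c; apply/negP => sc; have [mu [mu2 Hk s4 n0]] := key pr_p odd_p sc.
  by have [_ _ _ /(_ et)] := nat_cases t0 n0 (eig_nat pr_p odd_p mu2 Hk).
- move=> t1 hu c sc; apply: (proj1 (gen c sc (or_introl hu))).
  by rewrite negi_t t1 hu expr1 mulNr -expr2 i2 opprK.
- move=> t3 hu c sc; apply: (proj2 (gen c sc (or_introl hu))).
  rewrite negi_t t3 hu (_ : (-i) ^+ 3 * i = - (i ^+ 2 * i ^+ 2)); last by ring.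
  by rewrite i2 mulN1r opprK.
- move=> t1 hu c sc; apply: (proj2 (gen c sc (or_intror hu))).
  by rewrite negi_t t1 hu expr1 mulrN mulNr opprK -expr2 i2.
- move=> t3 hu c sc; apply: (proj1 (gen c sc (or_intror hu))).
  rewrite negi_t t3 hu (_ : (-i) ^+ 3 * - i = i ^+ 2 * i ^+ 2); last by ring.
  by rewrite i2 mulN1r opprK.
Qed.
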